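(* Let $R\in(0,\infty)\setminus\{1\}$, $b_1>0$, $b_2>1$, $b_3>0$, with $m,\ell,\varphi,E,O,v,D$ as in the context. Then at every $(q,n)$ with $q>0$ at which both sides are defined, $$O(q,n)=-\frac{(1-R)\,n\,D(q,n)}{2R(1-q)[(1-R)q+R]\,b_1\,[\ell(q)-n]}.$$
   Context: $m(q)=\frac{R(1-R)}{b_1}q^2-\frac{b_3(1-R)}{b_1}q+1$; $\ell(q)=m(q)+\frac{1-R}{b_1}q(1-q)+\frac{(b_2-1)R(1-R)}{b_1}\frac{q}{(1-R)q+R}$; $\varphi(q,n)=b_1(n-1)+(1-R)(b_3-2R)q+(2-b_2)R(1-R)$; $E(q)^2=4R^2(1-R)^2(b_2-1)(1-q)^2$; $O(q,n)=\frac{(1-R)n}{R(1-q)}-\frac{2(1-R)^2qn/R}{2(1-R)(1-q)[(1-R)q+R]-\varphi(q,n)-\mathrm{sgn}(1-R)\sqrt{\varphi(q,n)^2+E(q)^2}}$; $v(q,n)=\varphi(q,n)-\mathrm{sgn}(1-R)\sqrt{\varphi(q,n)^2+E(q)^2}$; $D(q,n)=2b_1[(1-R)q+R][n-m(q)]-q[v(q,n)-v(q,m(q))]$. *)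

(* Defs.v *)
From Stdlib Require Import Reals.
Open Scope R_scope.

Definition sgn (x : R) : R :=
  if Rlt_dec 0 x then 1 else if Rlt_dec x 0 then -1 else 0.

Section Fns.
Variables (Rr b1 b2 b3 : R).

Definition mfun (q : R) : R :=
  Rr * (1 - Rr) / b1 * q ^ 2 - b3 * (1 - Rr) / b1 * q + 1.

Definition lfun (q : R) : R :=
  mfun q + (1 - Rr) / b1 * q * (1 - q)
  + (b2 - 1) * Rr * (1 - Rr) / b1 * (q / ((1 - Rr) * q + Rr)).

Definition phi (q n : R) : R :=
  b1 * (n - 1) + (1 - Rr) * (b3 - 2 * Rr) * q + (2 - b2) * Rr * (1 - Rr).

(* E(q)^2; only the square of E enters the formulas *)
Definition E2 (q : R) : R :=
  4 * Rr ^ 2 * (1 - Rr) ^ 2 * (b2 - 1) * (1 - q) ^ 2.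

Definition Oden (q n : R) : R :=
  2 * (1 - Rr) * (1 - q) * ((1 - Rr) * q + Rr) - phi q n
  - sgn (1 - Rr) * sqrt (phi q n ^ 2 + E2 q).

Definition Ofun (q n : R) : R :=
  (1 - Rr) * n / (Rr * (1 - q))
  - (2 * (1 - Rr) ^ 2 * q * n / Rr) / Oden q n.

Definition vfun (q n : R) : R :=
  phi q n - sgn (1 - Rr) * sqrt (phi q n ^ 2 + E2 q).

Definition Dfun (q n : R) : R :=
  2 * b1 * ((1 - Rr) * q + Rr) * (n - mfun q) - q * (vfun q n - vfun q (mfun q)).
End Fns.

(* Main.v *)
Require Import Defs.
From Stdlib Require Import Reals Lra.
Open Scope R_scope.

Lemma alg (Rr b1 b2 b3 q n u : R) :
  q <> 1 -> (1 - Rr) * q + Rr <> 0 -> Rr <> 0 -> b1 <> 0 ->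
  2 * (1 - Rr) * (1 - q) * ((1 - Rr) * q + Rr) - phi Rr b1 b2 b3 q n - u <> 0 ->
  lfun Rr b1 b2 b3 q - n <> 0 ->
  (1 - Rr) * n / (Rr * (1 - q))
  - (2 * (1 - Rr) ^ 2 * q * n / Rr) / (2 * (1 - Rr) * (1 - q) * ((1 - Rr) * q + Rr) - phi Rr b1 b2 b3 q n - u)
  - (- ((1 - Rr) * n * (2 * b1 * ((1 - Rr) * q + Rr) * (n - mfun Rr b1 b3 q) - q * ((phi Rr b1 b2 b3 q n - u) - (-2 * Rr * (1 - Rr) * (b2 - 1)))))
    / (2 * Rr * (1 - q) * ((1 - Rr) * q + Rr) * b1 * (lfun Rr b1 b2 b3 q - n)))
  = (1 - Rr) * n * q * (phi Rr b1 b2 b3 q n ^ 2 + E2 Rr b2 q - u * u)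
    / (Rr * (1 - q) * (2 * (1 - Rr) * (1 - q) * ((1 - Rr) * q + Rr) - phi Rr b1 b2 b3 q n - u)
       * (2 * ((1 - Rr) * q + Rr) * b1 * (lfun Rr b1 b2 b3 q - n))).
Proof.
  intros H1 H2 H3 H4 H5 H6.
  assert (H1' : 1 - q <> 0) by lra.
  revert H5 H6. unfold lfun, phi, mfun, E2. intros H5 H6.
  field. repeat split; auto.
  intro Hc; apply H6.
  replace (Rr * (1 - Rr) / b1 * q ^ 2 - b3 * (1 - Rr) / b1 * q + 1 +
    (1 - Rr) / b1 * q * (1 - q) +
    (b2 - 1) * Rr * (1 - Rr) / b1 * (q / ((1 - Rr) * q + Rr)) - n)
   with (((Rr * (1 - Rr) * q ^ 2 - b3 * (1 - Rr) * q + b1 + (1 - Rr) * q * (1 - q)) *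
  ((1 - Rr) * q + Rr) + (b2 - 1) * Rr * (1 - Rr) * q -
  n * (((1 - Rr) * q + Rr) * b1)) / (((1 - Rr) * q + Rr) * b1)) by (field; auto).
  rewrite Hc. unfold Rdiv. ring.
Qed.

Lemma vm (Rr b1 b2 b3 q : R) :
  0 < Rr -> Rr <> 1 -> 0 < b1 -> 1 < b2 ->
  vfun Rr b1 b2 b3 q (mfun Rr b1 b3 q) = -2 * Rr * (1 - Rr) * (b2 - 1).
Proof.
  intros H1 H2 H3 H4.
  unfold vfun.
  assert (Hp : phi Rr b1 b2 b3 q (mfun Rr b1 b3 q) = Rr * (1 - Rr) * ((1 - q) ^ 2 + 1 - b2)).
  { unfold phi, mfun. field. lra. }
  rewrite Hp.
  assert (Hs : (Rr * (1 - Rr) * ((1 - q) ^ 2 + 1 - b2)) ^ 2 + E2 Rr b2 q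
              = Rsqr (Rr * (1 - Rr) * ((1 - q) ^ 2 + b2 - 1))).
  { unfold E2, Rsqr. ring. }
  rewrite Hs, sqrt_Rsqr_abs.
  assert (Ht : 0 < (1 - q) ^ 2 + b2 - 1) by (pose proof (pow2_ge_0 (1 - q)); lra).
  unfold sgn.
  destruct (Rlt_dec 0 (1 - Rr)) as [Ha|Ha].
  - rewrite Rabs_right. ring. apply Rle_ge.
    apply Rmult_le_pos; [apply Rmult_le_pos|]; lra.
  - destruct (Rlt_dec (1 - Rr) 0) as [Hb|Hb]; [|lra].
    rewrite Rabs_left. ring.
    assert (0 < Rr * (Rr - 1) * ((1 - q) ^ 2 + b2 - 1)).
    { apply Rmult_lt_0_compat; [apply Rmult_lt_0_compat|]; lra. }
    nra.
Qed.

Theorem lemmaE1 (Rr b1 b2 b3 q n : R) :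
  0 < Rr -> Rr <> 1 -> 0 < b1 -> 1 < b2 -> 0 < b3 ->
  0 < q ->
  (* both sides defined *)
  q <> 1 ->
  (1 - Rr) * q + Rr <> 0 ->
  Oden Rr b1 b2 b3 q n <> 0 ->
  lfun Rr b1 b2 b3 q - n <> 0 ->
  Ofun Rr b1 b2 b3 q n =
  - ((1 - Rr) * n * Dfun Rr b1 b2 b3 q n)
    / (2 * Rr * (1 - q) * ((1 - Rr) * q + Rr) * b1 * (lfun Rr b1 b2 b3 q - n)).
Proof.
  intros H1 H2 H3 H4 H5 H6 H7 H8 H9 H10.
  unfold Dfun. rewrite vm by auto.
  unfold Ofun. unfold Oden in *. unfold vfun.
  set (u := sgn (1 - Rr) * sqrt (phi Rr b1 b2 b3 q n ^ 2 + E2 Rr b2 q)).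
  assert (Hu : u * u = phi Rr b1 b2 b3 q n ^ 2 + E2 Rr b2 q).
  { unfold u.
    assert (Hs : sgn (1 - Rr) * sgn (1 - Rr) = 1).
    { unfold sgn. destruct (Rlt_dec 0 (1 - Rr)); [lra|].
      destruct (Rlt_dec (1 - Rr) 0); lra. }
    assert (HE : 0 <= phi Rr b1 b2 b3 q n ^ 2 + E2 Rr b2 q).
    { unfold E2. assert (0 <= 4 * Rr ^ 2 * (1 - Rr) ^ 2 * (b2 - 1) * (1 - q) ^ 2).
      { pose proof (pow2_ge_0 Rr); pose proof (pow2_ge_0 (1 - Rr)); pose proof (pow2_ge_0 (1 - q)).
        apply Rmult_le_pos; [apply Rmult_le_pos; [apply Rmult_le_pos; [apply Rmult_le_pos|]|]|]; lra. }
      assert (0 <= phi Rr b1 b2 b3 q n ^ 2) by apply pow2_ge_0. lra. }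
    transitivity (sgn (1 - Rr) * sgn (1 - Rr) * (sqrt (phi Rr b1 b2 b3 q n ^ 2 + E2 Rr b2 q) * sqrt (phi Rr b1 b2 b3 q n ^ 2 + E2 Rr b2 q))).
    ring. rewrite Hs, sqrt_sqrt; lra. }
  apply Rminus_diag_uniq.
  rewrite alg by (auto; lra).
  rewrite Hu. unfold Rdiv. ring.
Qed.
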